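(* Let $\mathcal{H} = (\mathbb{C}^2)^{\otimes k}$ be the space of $k = O(1)$ qubits and let $H = J\bigotimes_{i=1}^k Z_i$ with $J > 0$, where $Z_i$ is the Pauli $Z$ on qubit $i$. Suppose $(H',\mathcal{A})$ is an $(\eta,\epsilon)$-gadget for $H$, where $H'$ is a $k'$-local Hamiltonian with $k' < k$. Then, provided $\epsilon < 2^{-k'}J$, the gadget must satisfy $$\|H'\| \ge \frac{2^{-k'}J - \epsilon}{\eta} = \Omega(\eta^{-1}).$$
   Context: $\|\cdot\|$ is the operator norm. The ancillary space $\mathcal{A}$ is a tensor product of sites, and $H'$ being $k'$-local means $H'$ is a sum of terms each acting nontrivially on at most $k'$ sites among the $k$ qubits of $\mathcal{H}$ and the sites of $\mathcal{A}$. $(H',\mathcal{A})$ is an $(\eta,\epsilon)$-gadget for $H$ if there exist an orthogonal projector $P \ne 0$ on $\mathcal{A}$ and a unitary $U$ on $\mathcal{H}\otimes\mathcal{A}$ with $\|U - \mathbb{I}\| \le \eta$ and $\|P'H'P' - U(H\otimes P)U^\dagger\| \le \epsilon$, where $P' = U(\mathbb{I}\otimes P)U^\dagger$. *)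

(* Defs.v *)
From HB Require Import structures.
From mathcomp Require Import all_boot all_order all_algebra.
From mathcomp Require Import complex.
From mathcomp Require Import classical_sets reals.
Set Implicit Arguments. Unset Strict Implicit. Unset Printing Implicit Defensive.
Import Order.TTheory GRing.Theory Num.Theory.
Import ComplexField Normc.
Local Open Scope ring_scope.
Local Open Scope classical_set_scope.

Section QDefs.
Variable R : realType.
Local Notation C := (R[i]).

Definition site (k m : nat) : finType := ('I_k + 'I_m)%type.

(* Computational-basis configurations of H ⊗ A: a bit for each qubit
   (false = |0>, true = |1>) and a level in 'I_(d j) for ancilla site j. *)
Definition conf (k m : nat) (d : 'I_m -> nat) : finType :=
  ({ffun 'I_k -> bool} * {dffun forall j : 'I_m, 'I_(d j)})%type.

Definition op (T : finType) := T -> T -> C.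
Definition vec (T : finType) := T -> C.

Definition opmul (T : finType) (A B : op T) : op T :=
  fun x y => \sum_z A x z * B z y.
Definition opadd (T : finType) (A B : op T) : op T := fun x y => A x y + B x y.
Definition opsub (T : finType) (A B : op T) : op T := fun x y => A x y - B x y.
Definition opid (T : finType) : op T := fun x y => (x == y)%:R.
Definition adj (T : finType) (A : op T) : op T := fun x y => conjc (A y x).
Definition apply (T : finType) (A : op T) (v : vec T) : vec T :=
  fun x => \sum_y A x y * v y.

Definition vnorm (T : finType) (v : vec T) : R :=
  Num.sqrt (\sum_x normc (v x) ^+ 2).
Definition opnorm (T : finType) (A : op T) : R :=
  sup [set vnorm (apply A v) | v in [set v : vec T | vnorm v <= 1]].

Definition hermitian (T : finType) (A : op T) := forall x y, A x y = adj A x y.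
Definition unitary (T : finType) (U : op T) :=
  forall x y, opmul (adj U) U x y = opid x y /\ opmul U (adj U) x y = opid x y.
Definition orth_projector (T : finType) (P : op T) :=
  (forall x y, opmul P P x y = P x y) /\ hermitian P.
Definition nonzero_op (T : finType) (A : op T) := exists x y, A x y != 0.

Section Sites.
Variables (k m : nat) (d : 'I_m -> nat).
Local Notation cf := (conf k d).

Definition agree_at (s : site k m) (x y : cf) : bool :=
  match s with
  | inl i => x.1 i == y.1 i
  | inr j => x.2 j == y.2 j
  end.

(* A acts (nontrivially) only on the sites in S:  A = B_S ⊗ I_{S^c}. *)
Definition acts_on (S : {set site k m}) (A : op cf) : Prop :=
  exists B : op cf,
    (forall x x' y y', (forall s, s \in S -> agree_at s x x' && agree_at s y y') ->
        B x y = B x' y') /\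
    (forall x y, A x y = if [forall s in ~: S, agree_at s x y] then B x y else 0).

Definition klocal_hamiltonian (k' : nat) (H' : op cf) : Prop :=
  exists (n : nat) (S : 'I_n -> {set site k m}) (h : 'I_n -> op cf),
    (forall t, #|S t| <= k')%N /\ (forall t, acts_on (S t) (h t)) /\
    (forall t, hermitian (h t)) /\ (forall x y, H' x y = \sum_t h t x y).

Definition tensor (Hq : op {ffun 'I_k -> bool})
  (P : op {dffun forall j : 'I_m, 'I_(d j)}) : op cf :=
  fun x y => Hq x.1 y.1 * P x.2 y.2.

Definition gadget (eta eps : R) (H : op {ffun 'I_k -> bool}) (H' : op cf) : Prop :=
  exists (P : op {dffun forall j : 'I_m, 'I_(d j)}) (U : op cf),
    let P' := opmul U (opmul (tensor (@opid _) P) (adj U)) in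
    [/\ orth_projector P, nonzero_op P, unitary U,
       opnorm (opsub U (@opid cf)) <= eta &
       opnorm (opsub (opmul P' (opmul H' P'))
                     (opmul U (opmul (tensor H P) (adj U)))) <= eps].
End Sites.

(* H = J Z_1 ⊗ ... ⊗ Z_k, diagonal in the computational basis;
   Z|0> = |0>, Z|1> = -|1> (bit false = |0>). *)
Definition ZZstring (k : nat) (J : R) : op {ffun 'I_k -> bool} :=
  fun x y => (x == y)%:R * ((J%:C)%C * \prod_(i < k) (if x i then -1 else 1)).
End QDefs.

(* Main.v *)
Require Import Defs.
From HB Require Import structures.
From mathcomp Require Import all_boot all_order all_algebra.
From mathcomp Require Import complex.
From mathcomp Require Import classical_sets reals.
From mathcomp Require Import ring lra.
Import Order.TTheory GRing.Theory Num.Theory.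
Import ComplexField Normc.
Set Implicit Arguments. Unset Strict Implicit. Unset Printing Implicit Defensive.
Local Open Scope ring_scope.

Section Aux.
Variable R : realType.
Local Notation C := (R[i]).

Lemma normc_ge0 (z : C) : 0 <= normc z.
Proof. by case: z => a b; rewrite /normc sqrtr_ge0. Qed.

Lemma normc_sq (z : C) : normc z ^+ 2 = (complex.Re z) ^+ 2 + (complex.Im z) ^+ 2.
Proof. by case: z => a b; rewrite /normc /= sqr_sqrtr // addr_ge0 // sqr_ge0. Qed.

Lemma normc_conj (z : C) : normc (conjc z) = normc z.
Proof. by case: z => a b; rewrite /normc /= sqrrN. Qed.

Lemma normc_real (r : R) : 0 <= r -> normc (r%:C)%C = r.
Proof. by move=> r0; rewrite /normc /= expr0n /= addr0 sqrtr_sqr ger0_norm. Qed.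

Lemma normc_sqC (z : C) : ((normc z ^+ 2)%:C)%C = z * conjc z.
Proof.
rewrite normc_sq; case: z => a b /=; apply/eqP; rewrite eq_complex /=; apply/andP; split; apply/eqP; ring.
Qed.

Lemma normc_sum (I : finType) (F : I -> C) :
  normc (\sum_i F i) <= \sum_i normc (F i).
Proof.
elim/big_rec2: _ => [|i y1 y2 _ IH]; first by rewrite normc0.
by apply: le_trans (le_normcD _ _) _; rewrite lerD2l.
Qed.

Lemma conjcK' (z : C) : conjc (conjc z) = z.
Proof. by case: z => a b; rewrite /= opprK. Qed.

Definition dot (T : finType) (u v : vec R T) : C := \sum_x conjc (u x) * v x.

Lemma vnorm_ge0 (T : finType) (v : vec R T) : 0 <= vnorm v.
Proof. exact: sqrtr_ge0. Qed.

Lemma vnorm_sq (T : finType) (v : vec R T) : vnorm v ^+ 2 = \sum_x normc (v x) ^+ 2.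
Proof. by rewrite /vnorm sqr_sqrtr // sumr_ge0 // => x _; rewrite sqr_ge0. Qed.

Lemma dot_self (T : finType) (v : vec R T) : dot v v = ((vnorm v ^+ 2)%:C)%C.
Proof.
rewrite vnorm_sq rmorph_sum /dot; apply: eq_bigr => x _.
by rewrite mulrC; exact/esym/normc_sqC.
Qed.

Lemma sumsq_le (T : finType) (v : vec R T) r : 0 <= r -> vnorm v <= r ->
  \sum_x normc (v x) ^+ 2 <= r ^+ 2.
Proof.
move=> r0 vr; rewrite -vnorm_sq.
by rewrite ler_sqr // ?nnegrE // vnorm_ge0.
Qed.

Lemma dot_le (T : finType) (u v : vec R T) p q : 0 <= p -> 0 <= q ->
  vnorm u <= p -> vnorm v <= q -> normc (dot u v) <= p * q.
Proof.
move=> p0 q0 up vq.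
apply: le_trans (normc_sum _) _.
under eq_bigr do rewrite normcM normc_conj.
have hA := sumsq_le p0 up; have hB := sumsq_le q0 vq.
have Sge0 : 0 <= \sum_x normc (u x) * normc (v x).
  by apply: sumr_ge0 => x _; rewrite mulr_ge0 // normc_ge0.
have [pe|pn0] := eqVneq p 0.
  rewrite pe in hA *.
  have h0 : forall x, normc (u x) = 0.
    move=> x; have /psumr_eq0P h : \sum_x normc (u x) ^+ 2 = 0.
      apply/le_anti/andP; split; first by apply: le_trans hA _; rewrite expr0n.
      by rewrite sumr_ge0 // => y _; rewrite sqr_ge0.
    have /eqP := h (fun y _ => sqr_ge0 _) x isT; by rewrite sqrf_eq0 => /eqP.
  rewrite mul0r big1 // => x _; by rewrite h0 mul0r.
have [qe|qn0] := eqVneq q 0.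
  rewrite qe in hB *.
  have h0 : forall x, normc (v x) = 0.
    move=> x; have /psumr_eq0P h : \sum_x normc (v x) ^+ 2 = 0.
      apply/le_anti/andP; split; first by apply: le_trans hB _; rewrite expr0n /=.
      by rewrite sumr_ge0 // => y _; rewrite sqr_ge0.
    have /eqP := h (fun y _ => sqr_ge0 _) x isT; by rewrite sqrf_eq0 => /eqP.
  rewrite mulr0 big1 // => x _; by rewrite h0 mulr0.
have pp : 0 < p by rewrite lt_def pn0 p0.
have qp : 0 < q by rewrite lt_def qn0 q0.
have key : (2 * p * q) * \sum_x normc (u x) * normc (v x) <=
           q ^+ 2 * \sum_x normc (u x) ^+ 2 + p ^+ 2 * \sum_x normc (v x) ^+ 2.
  rewrite !mulr_sumr -big_split /=; apply: ler_sum => x _.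
  set a := normc (u x); set b := normc (v x).
  have : 0 <= (q * a - p * b) ^+ 2 by rewrite sqr_ge0.
  move=> h; nra.
have : q ^+ 2 * \sum_x normc (u x) ^+ 2 + p ^+ 2 * \sum_x normc (v x) ^+ 2 <= 2 * p ^+ 2 * q ^+ 2.
  have h1 : q ^+ 2 * \sum_x normc (u x) ^+ 2 <= q ^+ 2 * p ^+ 2 by rewrite ler_wpM2l // sqr_ge0.
  have h2 : p ^+ 2 * \sum_x normc (v x) ^+ 2 <= p ^+ 2 * q ^+ 2 by rewrite ler_wpM2l // sqr_ge0.
  lra.
move: key; set S := \sum_x _ * _; move=> key h.
have pq : 0 < p * q by rewrite mulr_gt0.
nra.
Qed.


Lemma apply_mul (T : finType) (A B : op R T) v :
  apply (opmul A B) v = apply A (apply B v).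
Proof.
apply: boolp.funext => x; rewrite /apply /opmul.
under eq_bigr do rewrite mulr_suml.
rewrite exchange_big; apply: eq_bigr => z _; rewrite mulr_sumr.
by apply: eq_bigr => y _; rewrite mulrA.
Qed.

Lemma sum_delta (T : finType) (b : T) (F : T -> C) :
  \sum_y (b == y)%:R * F y = F b.
Proof.
rewrite (bigD1 b) //= eqxx mul1r big1 ?addr0 // => y yb.
by rewrite eq_sym (negbTE yb) mul0r.
Qed.

Lemma apply_id (T : finType) (v : vec R T) : apply (@opid R T) v = v.
Proof. by apply: boolp.funext => x; rewrite /apply /opid sum_delta. Qed.

Lemma apply_sub (T : finType) (A B : op R T) v x :
  apply (opsub A B) v x = apply A v x - apply B v x.
Proof. by rewrite /apply /opsub -sumrB; apply: eq_bigr => y _; rewrite mulrBl. Qed.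

Lemma dot_adj (T : finType) (A : op R T) u v :
  dot u (apply A v) = dot (apply (adj A) u) v.
Proof.
rewrite /dot /apply.
under eq_bigr do rewrite mulr_sumr.
under [RHS]eq_bigr do rewrite rmorph_sum mulr_suml.
rewrite exchange_big; apply: eq_bigr => y _; apply: eq_bigr => x _.
rewrite /adj rmorphM /= conjcK'; ring.
Qed.

Lemma dot_self' (T : finType) (v : vec R T) : dot v v = ((\sum_x normc (v x) ^+ 2)%:C)%C.
Proof. by rewrite dot_self vnorm_sq. Qed.

Lemma unitary_dot (T : finType) (U : op R T) u v : unitary U ->
  dot (apply U u) (apply U v) = dot u v.
Proof.
move=> hU; rewrite dot_adj -apply_mul.
have -> : opmul (adj U) U = @opid R T.
  by apply: boolp.funext => x; apply: boolp.funext => y; case: (hU x y).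
by rewrite apply_id.
Qed.

Lemma unitary_sumsq (T : finType) (U : op R T) v : unitary U ->
  \sum_x normc (apply U v x) ^+ 2 = \sum_x normc (v x) ^+ 2.
Proof.
move=> hU; apply: (@complexI R); rewrite -!dot_self'.
exact: unitary_dot.
Qed.

Lemma unitary_vnorm (T : finType) (U : op R T) v : unitary U ->
  vnorm (apply U v) = vnorm v.
Proof. by move=> hU; rewrite /vnorm unitary_sumsq. Qed.

Lemma normc_le1 (T : finType) (v : vec R T) y : vnorm v <= 1 -> normc (v y) <= 1.
Proof.
move=> h; have := sumsq_le ler01 h; rewrite expr1n => hs.
have : normc (v y) ^+ 2 <= 1.
  apply: le_trans hs; rewrite (bigD1 y) //= lerDl sumr_ge0 // => z _.
  by rewrite sqr_ge0.
have := normc_ge0 (v y); move=> h0 h1; nra.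
Qed.

Lemma opnorm_has_sup (T : finType) (A : op R T) :
  has_sup [set vnorm (apply A v) | v in [set v : vec R T | vnorm v <= 1]].
Proof.
split.
  exists (vnorm (apply A (fun _ => 0))); exists (fun _ => 0) => //.
  rewrite /= /vnorm big1 ?sqrtr0 // => x _; by rewrite normc0 expr0n.
exists (Num.sqrt (\sum_x (\sum_y normc (A x y)) ^+ 2)).
move=> r [v /= hv <-]; rewrite /vnorm ler_sqrt; last first.
  by apply: sumr_ge0 => x _; rewrite sqr_ge0.
apply: ler_sum => x _; rewrite ler_sqr ?nnegrE ?normc_ge0 //; last first.
  by apply: sumr_ge0 => y _; rewrite normc_ge0.
apply: le_trans (normc_sum _) _; apply: ler_sum => y _.
rewrite normcM -[X in _ <= X]mulr1 ler_wpM2l ?normc_ge0 //.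
exact: normc_le1.
Qed.

Lemma opnorm_ub (T : finType) (A : op R T) v : vnorm v <= 1 ->
  vnorm (apply A v) <= opnorm A.
Proof.
move=> hv; apply: (sup_upper_bound (opnorm_has_sup A)).
by exists v.
Qed.

Lemma opnorm_ge0 (T : finType) (A : op R T) : 0 <= opnorm A.
Proof.
have h0 : vnorm (fun _ : T => (0:C)) = 0.
  rewrite /vnorm big1 ?sqrtr0 // => x _; by rewrite normc0 expr0n.
apply: le_trans (opnorm_ub A (v := fun _ => 0) _); first exact: vnorm_ge0.
by rewrite h0 ler01.
Qed.


Lemma dot_subr (T : finType) (u v v' : vec R T) :
  dot u (fun x => v x - v' x) = dot u v - dot u v'.
Proof. by rewrite /dot -sumrB; apply: eq_bigr => x _; rewrite mulrBr. Qed.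

Lemma dot_subl (T : finType) (u u' v : vec R T) :
  dot (fun x => u x - u' x) v = dot u v - dot u' v.
Proof. by rewrite /dot -sumrB; apply: eq_bigr => x _; rewrite rmorphB mulrBl. Qed.

Lemma apply_subv (T : finType) (A : op R T) (u v : vec R T) :
  apply A (fun x => u x - v x) = fun x => apply A u x - apply A v x.
Proof.
by apply: boolp.funext => x; rewrite /apply -sumrB; apply: eq_bigr => y _; rewrite mulrBr.
Qed.

Lemma dot_scal (T : finType) (u v : vec R T) c :
  dot u (fun x => c * v x) = c * dot u v.
Proof. by rewrite /dot mulr_sumr; apply: eq_bigr => x _; ring. Qed.

Lemma adjK (T : finType) (A : op R T) : adj (adj A) = A.
Proof. by apply: boolp.funext => x; apply: boolp.funext => y; rewrite /adj; case: (A x y) => a b; rewrite /= opprK. Qed.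

Lemma unitary_inv (T : finType) (U : op R T) v : unitary U ->
  apply (adj U) (apply U v) = v.
Proof.
move=> hU; rewrite -apply_mul.
have -> : opmul (adj U) U = @opid R T.
  by apply: boolp.funext => x; apply: boolp.funext => y; case: (hU x y).
by rewrite apply_id.
Qed.

Lemma hermitian_adj (T : finType) (A : op R T) : Defs.hermitian A -> adj A = A.
Proof. by move=> hA; apply: boolp.funext => x; apply: boolp.funext => y; rewrite -hA. Qed.

Lemma delta_id (T : finType) (G : op R T) (z w : vec R T) :
  dot z (apply G z) - dot w (apply G w) =
  dot (fun x => z x - w x) (apply G z) + dot w (apply G (fun x => z x - w x)).
Proof. by rewrite dot_subl apply_subv dot_subr; ring. Qed.


Section Sites.
Variables (k m : nat) (d : 'I_m -> nat).
Local Notation cf := (conf k d).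
Local Notation QB := {ffun 'I_k -> bool}.
Local Notation AN := {dffun forall j : 'I_m, 'I_(d j)}.

Lemma sum_conf (V : nmodType) (F : cf -> V) : \sum_x F x = \sum_(x1 : QB) \sum_(x2 : AN) F (x1, x2).
Proof. by rewrite pair_big; apply: eq_bigr => -[]. Qed.

Definition wv (b : QB) (a : vec R AN) : vec R cf := fun x => (b == x.1)%:R * a x.2.

Lemma apply_tensor_w (Hq : op R QB) (P : op R AN) a b : apply P a = a ->
  apply (tensor Hq P) (wv b a) = fun x => Hq x.1 b * a x.2.
Proof.
move=> hP; apply: boolp.funext => x; rewrite {1}/apply sum_conf.
transitivity (\sum_y1 (b == y1)%:R * (Hq x.1 y1 * apply P a x.2)).
  apply: eq_bigr => y1 _; rewrite /apply !mulr_sumr; apply: eq_bigr => y2 _.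
  by rewrite /tensor /wv /=; ring.
by rewrite sum_delta hP.
Qed.

Lemma wv_vnorm b a : vnorm (wv b a) = vnorm a.
Proof.
rewrite /vnorm sum_conf (bigD1 b) //= [X in _ + X]big1 ?addr0.
  by congr Num.sqrt; apply: eq_bigr => x2 _; rewrite /wv /= eqxx mul1r.
move=> x1 hx1; apply: big1 => x2 _; rewrite /wv /= eq_sym (negbTE hx1) mul0r normc0 expr0n //.
Qed.

Definition sgn (b : QB) : C := \prod_(i < k) (if b i then -1 else 1).

Definition flip (i : 'I_k) (b : QB) : QB := [ffun j => if j == i then ~~ b j else b j].

Lemma flipK i : involutive (flip i).
Proof.
move=> b; apply/ffunP => j; rewrite !ffunE.
by case: (j == i) => //; rewrite negbK.
Qed.

Lemma sgn_flip i b : sgn (flip i b) = - sgn b.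
Proof.
rewrite /sgn (bigD1 i) //= [in RHS](bigD1 i) //= ffunE eqxx.
have -> : \prod_(j < k | j != i) (if flip i b j then -1 else 1) =
          \prod_(j < k | j != i) (if b j then -1 else (1 : C)).
  by apply: eq_bigr => j hj; rewrite ffunE (negbTE hj).
by case: (b i) => /=; ring.
Qed.

Definition FG (a : vec R AN) (G : op R cf) (b : QB) : C :=
  \sum_x2 \sum_y2 conjc (a x2) * G (b, x2) (b, y2) * a y2.

Lemma dot_w (a : vec R AN) G b : dot (wv b a) (apply G (wv b a)) = FG a G b.
Proof.
rewrite /dot sum_conf.
transitivity (\sum_x1 (b == x1)%:R * (\sum_x2 conjc (a x2) * apply G (wv b a) (x1, x2))).
  apply: eq_bigr => x1 _; rewrite mulr_sumr; apply: eq_bigr => x2 _.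
  by rewrite /wv /= rmorphM rmorph_nat /=; ring.
rewrite sum_delta /FG; apply: eq_bigr => x2 _; rewrite /apply sum_conf mulr_sumr.
transitivity (\sum_y1 (b == y1)%:R * (\sum_y2 conjc (a x2) * G (b, x2) (y1, y2) * a y2)).
  apply: eq_bigr => y1 _; rewrite !mulr_sumr; apply: eq_bigr => y2 _.
  by rewrite /wv /=; ring.
by rewrite sum_delta.
Qed.

Lemma FG_sum a (G : op R cf) n (h : 'I_n -> op R cf) b :
  (forall x y, G x y = \sum_t h t x y) -> FG a G b = \sum_t FG a (h t) b.
Proof.
move=> hG; rewrite /FG.
under eq_bigr do under eq_bigr do rewrite hG mulr_sumr mulr_suml.
under eq_bigr do rewrite exchange_big.
by rewrite exchange_big.
Qed.

Lemma flip_zero a (G : op R cf) i :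
  (forall b x2 y2, G (flip i b, x2) (flip i b, y2) = G (b, x2) (b, y2)) ->
  \sum_b sgn b * FG a G b = 0.
Proof.
move=> hG; set S := \sum_b _.
have hS : S = - S.
  rewrite {1}/S (reindex_inj (can_inj (flipK i))) /= /S -sumrN.
  apply: eq_bigr => b _; rewrite sgn_flip mulNr.
  rewrite (_ : FG a G (flip i b) = FG a G b) //.
  by rewrite /FG; apply: eq_bigr => x2 _; apply: eq_bigr => y2 _; rewrite hG.
have : S *+ 2 = 0 by rewrite mulr2n {1}hS addNr.
by move/eqP; rewrite mulrn_eq0 /= => /eqP.
Qed.


Lemma acts_flip (S : {set site k m}) (h : op R cf) i :
  acts_on S h -> (inl i : site k m) \notin S ->
  forall b x2 y2, h (flip i b, x2) (flip i b, y2) = h (b, x2) (b, y2).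
Proof.
case=> B [hB hh] hi b x2 y2; rewrite !hh.
have -> : [forall s in ~: S, agree_at s (flip i b, x2) (flip i b, y2)] =
          [forall s in ~: S, agree_at s (b, x2) (b, y2)].
  by apply: eq_forallb => -[j|j] /=; rewrite ?eqxx.
rewrite (hB (flip i b, x2) (b, x2) (flip i b, y2) (b, y2)) // => -[j|j] hj /=.
  have hji : j != i by apply: contraNneq hi => <-.
  by rewrite ffunE (negbTE hji) eqxx.
by rewrite !eqxx.
Qed.

Lemma exists_free (S : {set site k m}) k' : (#|S| <= k')%N -> (k' < k)%N ->
  exists i, (inl i : site k m) \notin S.
Proof.
move=> hS hk; case: (boolP [exists i, (inl i : site k m) \notin S]) => [/existsP //|/existsPn H].
have sub : [set (inl i : site k m) | i : 'I_k] \subset S.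
  by apply/fintype.subsetP => s /finset.imsetP [i _ ->]; exact: negbNE (H i).
have := subset_leq_card sub; rewrite card_imset; last by move=> ? ? [].
rewrite card_ord => hkS.
have : (k <= k')%N by apply: leq_trans hkS hS.
by rewrite leqNgt hk.
Qed.

Lemma locality a (H' : op R cf) k' : (k' < k)%N -> klocal_hamiltonian k' H' ->
  \sum_b sgn b * FG a H' b = 0.
Proof.
move=> hk [n [S [h [hS [hA [hH hsum]]]]]].
under eq_bigr => b _ do rewrite (FG_sum a b hsum) mulr_sumr.
rewrite exchange_big big1 // => t _.
have [i hi] := exists_free (hS t) hk.
apply: (@flip_zero a (h t) i); exact: acts_flip.
Qed.

Lemma local0 (H' : op R cf) : klocal_hamiltonian 0 H' ->
  forall x0 x y, H' x y = (x == y)%:R * H' x0 x0.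
Proof.
move=> [n [S [h [hS [hA [hH hsum]]]]]] x0 x y.
rewrite !hsum mulr_sumr; apply: eq_bigr => t _.
have S0 : S t = finset.set0 by apply/eqP; rewrite -cards_eq0 -leqn0.
case: (hA t) => B [hB hh]; rewrite !hh S0.
have -> : [forall s in ~: finset.set0, agree_at s x0 x0].
  by apply/forallP => s; apply/implyP => _; case: s => j /=.
rewrite (hB x x0 y x0); last by move=> s; rewrite S0 finset.in_set0.
have [exy|nxy] := eqVneq x y.
  rewrite mul1r; have -> // : [forall s in ~: finset.set0, agree_at s x y].
  by apply/forallP => s; apply/implyP => _; rewrite exy; case: s => j /=.
rewrite mul0r; have -> // : [forall s in ~: finset.set0, agree_at s x y] = false.
apply/negbTE/negP => /forallP hall; move/eqP: nxy; apply.
have h1 : x.1 = y.1.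
  apply/ffunP => i; have := hall (inl i); rewrite finset.in_setC finset.in_set0 /=; by move/eqP.
have h2 : x.2 = y.2.
  apply/ffunP => j; have := hall (inr j); rewrite finset.in_setC finset.in_set0 /=; by move/eqP.
by move: h1 h2; clear; case: x => x1 x2; case: y => y1 y2 /= -> ->.
Qed.

End Sites.

Lemma exists_a (T : finType) (P : op R T) : orth_projector P -> nonzero_op P ->
  exists a : vec R T, apply P a = a /\ vnorm a = 1.
Proof.
move=> [hPP hPh] [x [y hxy]].
pose c : vec R T := fun z => P z y.
have hc : apply P c = c.
  by apply: boolp.funext => z; rewrite /apply /c -(hPP z y).
set s := vnorm c.
have s2 : s ^+ 2 = \sum_z normc (c z) ^+ 2 by rewrite vnorm_sq.
have npos : 0 < normc (c x).
  rewrite lt_def normc_ge0 andbT; apply/eqP => /eq0_normc h.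
  by move/eqP: hxy; apply.
have spos : 0 < s.
  have : normc (c x) ^+ 2 <= s ^+ 2.
    rewrite s2 (bigD1 x) //= lerDl sumr_ge0 // => z _; exact: sqr_ge0.
  have := vnorm_ge0 c; rewrite -/s => h0 h1; nra.
exists (fun z => c z * ((s^-1)%:C)%C); split.
  apply: boolp.funext => z; rewrite /apply.
  under eq_bigr do rewrite mulrA; rewrite -mulr_suml.
  by have := congr1 (fun f => f z) hc; rewrite /apply => ->.
rewrite /vnorm.
under eq_bigr do rewrite normcM normc_real ?invr_ge0 ?(ltW spos) // exprMn.
rewrite -mulr_suml -s2 -exprMn divff ?expr1n ?sqrtr1 //.
by rewrite gt_eqF.
Qed.


Lemma normc_nat n : normc (n%:R : C) = n%:R.
Proof.
have -> : (n%:R : C) = ((n%:R : R)%:C)%C by rewrite rmorph_nat.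
by rewrite normc_real ?ler0n.
Qed.

Lemma sgn_sq k (b : {ffun 'I_k -> bool}) : sgn b * sgn b = 1.
Proof.
rewrite /sgn -big_split /=; apply: big1 => i _; by case: (b i); rewrite ?mulrNN mulr1.
Qed.

Lemma normc_sgn k (b : {ffun 'I_k -> bool}) : normc (sgn b) = 1.
Proof.
have h : normc (sgn b) * normc (sgn b) = 1 by rewrite -normcM sgn_sq normc1.
have := normc_ge0 (sgn b); move=> h0; nra.
Qed.

Lemma herm_sum k m (d : 'I_m -> nat) k' (H' : op R (conf k d)) :
  klocal_hamiltonian k' H' -> adj H' = H'.
Proof.
move=> [n [S [h [hS [hA [hH hsum]]]]]].
apply: boolp.funext => x; apply: boolp.funext => y.
rewrite /adj !hsum rmorph_sum; apply: eq_bigr => t _.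
by rewrite (hH t x y) /adj.
Qed.

Lemma key k k' m (d : 'I_m -> nat) (J eta eps : R) (H' : op R (conf k d)) :
  0 < J -> (k' < k)%N -> klocal_hamiltonian k' H' ->
  gadget eta eps (ZZstring J) H' ->
  [/\ 0 <= eta, 0 <= eps, J <= eps + 2 * eta * opnorm H' & (k' = 0%N -> J <= eps)].
Proof.
move=> J0 hk hloc [P [U]]; rewrite /=; move=> [hP hnz hU hUeta hD].
set N := opnorm H'.
set D := opsub _ _ in hD.
pose Q : op R (conf k d) := tensor (@opid R _) P.
pose T : op R (conf k d) := tensor (ZZstring J) P.
pose P' := opmul U (opmul Q (adj U)).
have hDdef : D = opsub (opmul P' (opmul H' P')) (opmul U (opmul T (adj U))) by [].
clearbody D.
have eta0 : 0 <= eta := le_trans (opnorm_ge0 _) hUeta.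
have eps0 : 0 <= eps := le_trans (opnorm_ge0 _) hD.
have N0 : 0 <= N := opnorm_ge0 _.
have [a [hPa ha1]] := exists_a hP hnz.
have hadjH := herm_sum hloc.
have hadjQ : adj Q = Q.
  apply: boolp.funext => x; apply: boolp.funext => y.
  rewrite /adj /Q /tensor rmorphM /opid rmorph_nat eq_sym.
  by case: hP => _ hPh; rewrite (hPh x.2 y.2) /adj.
pose w (b : {ffun 'I_k -> bool}) : vec R (conf k d) := wv b a.
pose z (b : {ffun 'I_k -> bool}) := apply U (w b).
have wn b : vnorm (w b) = 1 by rewrite /w wv_vnorm.
have zn b : vnorm (z b) = 1 by rewrite /z unitary_vnorm.
have ww b : dot (w b) (w b) = 1 by rewrite dot_self wn expr1n.
have Qw b : apply Q (w b) = w b.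
  rewrite /Q apply_tensor_w //; apply: boolp.funext => x.
  by rewrite /w /wv /opid eq_sym.
have Tw b : apply T (w b) = fun x => ((J%:C)%C * sgn b) * w b x.
  rewrite /T apply_tensor_w //; apply: boolp.funext => x.
  rewrite /w /wv /ZZstring; case: eqP => [->|hne]; first by rewrite eqxx !mul1r.
  have -> : (b == x.1) = false by apply/eqP => h; apply: hne; rewrite h.
  by rewrite !mul0r mulr0.
have hDz b : dot (z b) (apply D (z b)) =
    dot (z b) (apply H' (z b)) - (J%:C)%C * sgn b.
  have -> : apply D (z b) = fun x =>
      apply (opmul P' (opmul H' P')) (z b) x - apply (opmul U (opmul T (adj U))) (z b) x.
    by apply: boolp.funext => x; rewrite hDdef apply_sub.
  rewrite dot_subr; congr (_ - _).
    rewrite !apply_mul /z unitary_inv // Qw unitary_dot //.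
    rewrite [LHS]dot_adj hadjQ Qw [LHS]dot_adj adjK //.
  rewrite !apply_mul /z unitary_inv // Tw unitary_dot // dot_scal ww mulr1.
  by [].
pose Dl b := dot (z b) (apply H' (z b)) - dot (w b) (apply H' (w b)).
have Dl_bound b : normc (Dl b) <= 2 * eta * N.
  rewrite /Dl delta_id.
  set del := fun x => _.
  have hdel : vnorm del <= eta.
    have -> : del = apply (opsub U (@opid R _)) (w b).
      by apply: boolp.funext => x; rewrite apply_sub apply_id.
    apply: le_trans hUeta; apply: opnorm_ub; by rewrite wn.
  apply: le_trans (le_normcD _ _) _.
  rewrite -[X in _ <= X]/(2 * eta * N) mulr2n mulrDl mul1r mulrDl.
  apply: lerD.
    apply: dot_le => //; apply: opnorm_ub; by rewrite zn.
  rewrite dot_adj hadjH mulrC.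
  apply: dot_le => //; apply: opnorm_ub; by rewrite wn.
have Dl0 : k' = 0%N -> forall b, Dl b = 0.
  move=> k0 b; subst k'.
  case: hnz => x2 _.
  have hl := local0 hloc (b, x2).
  have hap u : apply H' u = fun x => H' (b, x2) (b, x2) * u x.
    apply: boolp.funext => x; rewrite /apply.
    under eq_bigr do rewrite hl.
    by rewrite -(sum_delta x) mulr_sumr; apply: eq_bigr => y _; ring.
  by rewrite /Dl !hap !dot_scal /z unitary_dot // subrr.
have sum_id : \sum_b sgn b * (Dl b - dot (z b) (apply D (z b))) =
              (J%:C)%C * (2 ^ k)%:R.
  transitivity (\sum_b ((J%:C)%C - sgn b * FG a H' b)).
    apply: eq_bigr => b _; rewrite hDz /Dl /w dot_w.
    by rewrite -{2}[(J%:C)%C]mulr1 -(sgn_sq b); ring.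
  by rewrite sumrB (locality a hk hloc) subr0 sumr_const card_ffun card_bool card_ord mulr_natr.
have main : forall beta, (forall b, normc (Dl b) <= beta) -> J <= eps + beta.
  move=> beta hb.
  have : normc ((J%:C)%C * (2 ^ k)%:R) <= (2 ^ k)%:R * (eps + beta).
    rewrite -sum_id; apply: le_trans (normc_sum _) _.
    have -> : (2 ^ k)%:R * (eps + beta) = \sum_(b : {ffun 'I_k -> bool}) (eps + beta).
      by rewrite sumr_const card_ffun card_bool card_ord mulr_natl.
    apply: ler_sum => b _; rewrite normcM normc_sgn mul1r.
    apply: le_trans (le_normcD _ _) _; rewrite normcN addrC; apply: lerD => //.
    have hz1 : vnorm (z b) <= 1 by rewrite zn.
    have hDzb : vnorm (apply D (z b)) <= eps := le_trans (opnorm_ub D hz1) hD.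
    by have := dot_le ler01 eps0 hz1 hDzb; rewrite mul1r.
  move=> h.
  have h2 : normc ((J%:C)%C * (2 ^ k)%:R) = J * (2 ^ k)%:R.
    by rewrite normcM normc_real ?ltW // normc_nat.
  rewrite h2 mulrC in h.
  by move: h; rewrite ler_pM2l // ltr0n expn_gt0.
split => //.
  apply: main => b; exact: Dl_bound.
move=> k0; rewrite -[eps]addr0; apply: main => b; rewrite Dl0 // normc0 //.
Qed.

End Aux.

Unset Implicit Arguments.

Theorem theorem3p3 (R : realType) (k k' m : nat) (d : 'I_m -> nat)
    (J eta eps : R) (H' : op R (conf k d)) :
  0 < J ->
  (k' < k)%N ->
  klocal_hamiltonian k' H' ->
  gadget eta eps (ZZstring J) H' ->
  eps < J / 2 ^+ k' ->
  (J / 2 ^+ k' - eps) / eta <= opnorm H'.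
Proof.
move=> J0 hk hloc hg heps.
have [eta0 eps0 hJ hJ0] := key J0 hk hloc hg.
have N0 := opnorm_ge0 H'.
set N := opnorm H' in hJ N0 *.
have [->|etan0] := eqVneq eta 0; first by rewrite invr0 mulr0.
have etap : 0 < eta by rewrite lt_def etan0 eta0.
rewrite ler_pdivrMr //.
case: k' hk hloc hJ0 heps => [|k''] hk hloc hJ0 heps.
  by have := hJ0 erefl; rewrite expr0 divr1 in heps *; move=> h; lra.
set t := (2 : R) ^+ k''.+1.
have t1 : 1 <= (2 : R) ^+ k'' by rewrite exprn_ege1 // ler1n.
have t2 : 2 <= t by rewrite /t exprS; nra.
have tn0 : t != 0 by rewrite gt_eqF // (lt_le_trans _ t2).
set x := J / t.
have xt : x * t = J by rewrite /x divfK.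
have x0 : 0 <= x by rewrite /x divr_ge0 // ?ltW // (lt_le_trans _ t2).
have h2x : 2 * x <= J by rewrite -xt mulrC ler_wpM2l.
clearbody x N.
lra.
Qed.
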